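(* Given $r_1, \dots, r_n \in R_C$ and a finite $F_0 \subseteq K[X]_{\text{irr}}^{0 < C < \infty}$, one can write, for all $i \in \{1, \dots, n\}$, $$r_i = \rho_{F,i}[\theta] \circ \eta[\theta]^{-1} \circ \pi_{\text{Im}(F^C)} + \sum_{f \in F} \rho_{f,i}[\theta] \circ \pi_{\text{Ker}(f^C)},$$ where (1) $F \subseteq K[X]_{\text{irr}}^{0 < C < \infty}$ is finite with $F_0 \subseteq F$; (2) $\eta$ is a monic polynomial all of whose irreducible factors lie in $F \cup \{f \in K[X]_{\text{irr}} : C(f)=0\}$; (3) each $\rho_{F,i}$ has all irreducible factors in $F \cup \{f : C(f)=0\} \cup \{f : C(f)=\infty\}$, and $\gcd(\rho_{F,1}, \dots, \rho_{F,n}, \eta) = 1$; (4) the $\rho_{f,i}$ are polynomials with $\deg(\rho_{f,i}) < \deg(f^{C(f)})$.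
   Context: Let $K$ be a field and $K[X]_{\text{irr}}$ the set of monic irreducible polynomials over $K$. A kernel configuration $C$ is a function $C\colon K[X]_{\text{irr}} \to \mathbb{N}\cup\{\infty\}$ together with a degree $\deg(C)$ which is either $\infty$ (transcendental) or equal to $\sum_f \deg(f)\cdot C(f)$ (algebraic, with $\text{MiPo}(C)=\prod_f f^{C(f)}$). Write $f^C := f^{C(f)}$, $F^C := \prod_{f\in F} f^{C(f)}$ for finite $F$, and $K[X]_{\text{irr}}^{0<C<\infty} := \{f : 0 < C(f) < \infty\}$. For an endomorphism $\theta$ of a $K$-vector space $\mathbb{V}$ and $\rho=\sum_i (\rho)_i X^i$, $\rho[\theta] := \sum_i (\rho)_i\theta^i$. $\theta$ is a $C$-endomorphism if $\text{MiPo}(C)[\theta]=0$ (algebraic case) resp. $\text{Ker}(f^{C(f)}[\theta]) = \text{Ker}(f^{C(f)+1}[\theta])$ for all $f$ with $C(f)<\infty$ (transcendental case); it is $C$-image-complete if moreover $\text{Im}(f^{C(f)+1}[\theta]) = \text{Im}(f^{C(f)}[\theta])$ for all $f$ with $C(f)<\infty$. Then $\mathbb{V} = \text{Im}(F^C[\theta])\oplus\text{Ker}(F^C[\theta])$ for finite $F \subseteq K[X]_{\text{irr}}^{0<C<\infty}$, with canonical projections $\pi_{\text{Im}(F^C)}, \pi_{\text{Ker}(F^C)}$ (and $\pi_{\text{Ker}(f^C)} := \pi_{\text{Ker}(\{f\}^C)}$). For monic $\eta$ whose set $\text{Fac}(\eta)$ of irreducible factors satisfies $C(f)<\infty$ for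 all $f \in \text{Fac}(\eta)$, $\eta[\theta]^{-1}(x)$ is the unique $u \in \text{Im}(\text{Fac}(\eta)^C[\theta])$ with $\eta[\theta](u) = \pi_{\text{Im}(\text{Fac}(\eta)^C)}(x)$. $R_C$ is the commutative ring (under $+$, $\circ$) of endomorphisms, uniformly definable in the theory of $K$-vector spaces with a $C$-image-complete endomorphism $\theta$, generated by all $\rho[\theta]$, all $\pi_{\text{Im}(F^C)}$ and all such $\eta[\theta]^{-1}$; equality in $R_C$ means agreement in every such structure. *)

(* Defs.v *)
From HB Require Import structures.
From mathcomp Require Import all_boot all_order all_algebra.
From Stdlib Require Import ClassicalEpsilon.
Set Implicit Arguments. Unset Strict Implicit. Unset Printing Implicit Defensive.
Import Order.TTheory GRing.Theory Num.Theory.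
Local Open Scope ring_scope.

Section KernelConf.
Variable K : fieldType.

Definition mirr (f : {poly K}) : Prop := f \is monic /\ irreducible_poly f.

(* A kernel configuration: C : K[X]_irr -> N u {oo} (None = oo; values on
   non monic-irreducible polynomials are irrelevant), and deg(C) (None = oo). *)
Record kconf := KConf { Cval : {poly K} -> option nat; Cdeg : option nat }.

Definition Cn (C : kconf) (f : {poly K}) : nat := odflt 0%N (Cval C f).

Definition Csupport (C : kconf) (s : seq {poly K}) : Prop :=
  uniq s /\ forall f, f \in s <-> (mirr f /\ Cval C f <> Some 0%N).

Definition kconf_wf (C : kconf) : Prop :=
  match Cdeg C with
  | None => True
  | Some d => (forall f, mirr f -> Cval C f <> None) /\
      exists s, Csupport C s /\ d = (\sum_(f <- s) (size f).-1 * Cn C f)%N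
  end.

Definition powC (C : kconf) (F : seq {poly K}) : {poly K} :=
  \prod_(f <- F) f ^+ Cn C f.

Definition fin_sub_irr (C : kconf) (F : seq {poly K}) : Prop :=
  uniq F /\ forall f, f \in F -> mirr f /\ exists k, Cval C f = Some k.+1.

Definition Fac (eta : {poly K}) : seq {poly K} :=
  epsilon (inhabits [::])
    (fun s => uniq s /\ forall f, f \in s <-> (mirr f /\ f %| eta)).

Variable V : lmodType K.

Definition peval (p : {poly K}) (th : V -> V) (x : V) : V :=
  \sum_(i < size p) p`_i *: iter i th x.

Definition kerEq (p q : {poly K}) (th : V -> V) : Prop :=
  forall v, peval p th v = 0 <-> peval q th v = 0.
Definition imEq (p q : {poly K}) (th : V -> V) : Prop :=
  forall v, (exists w, peval p th w = v) <-> (exists w, peval q th w = v).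

Definition C_endo (C : kconf) (th : V -> V) : Prop :=
  match Cdeg C with
  | Some _ => forall s, Csupport C s -> forall v, peval (powC C s) th v = 0
  | None => forall f k, mirr f -> Cval C f = Some k ->
              kerEq (f ^+ k) (f ^+ k.+1) th
  end.

Definition C_img_complete (C : kconf) (th : V -> V) : Prop :=
  C_endo C th /\
  forall f k, mirr f -> Cval C f = Some k -> imEq (f ^+ k.+1) (f ^+ k) th.

Definition proj_im (P : {poly K}) (th : V -> V) (x : V) : V :=
  epsilon (inhabits 0)
    (fun u => (exists w, peval P th w = u) /\ peval P th (x - u) = 0).

Definition pi_Im (C : kconf) (F : seq {poly K}) (th : V -> V) (x : V) : V :=
  proj_im (powC C F) th x.

Definition pi_Ker (C : kconf) (F : seq {poly K}) (th : V -> V) (x : V) : V :=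
  x - pi_Im C F th x.

Definition inv_eval (C : kconf) (eta : {poly K}) (th : V -> V) (x : V) : V :=
  epsilon (inhabits 0)
    (fun u => (exists w, peval (powC C (Fac eta)) th w = u) /\
              peval eta th u = pi_Im C (Fac eta) th x).

End KernelConf.

(* Syntactic generators of R_C, closed under + and composition *)
Inductive rterm (K : fieldType) : Type :=
| RPoly of {poly K}
| RProjIm of seq {poly K}
| RInv of {poly K}
| RAdd of rterm K & rterm K
| RComp of rterm K & rterm K.

Fixpoint rvalid (K : fieldType) (C : kconf K) (t : rterm K) : Prop :=
  match t with
  | RPoly _ => True
  | RProjIm F => fin_sub_irr C F
  | RInv eta => eta \is monic /\
      (forall f, mirr f -> f %| eta -> exists k, Cval C f = Some k)
  | RAdd t1 t2 => rvalid C t1 /\ rvalid C t2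
  | RComp t1 t2 => rvalid C t1 /\ rvalid C t2
  end.

Fixpoint rinterp (K : fieldType) (C : kconf K) (V : lmodType K)
    (th : V -> V) (t : rterm K) : V -> V :=
  match t with
  | RPoly p => peval p th
  | RProjIm F => pi_Im C F th
  | RInv eta => inv_eval C eta th
  | RAdd t1 t2 => fun x => rinterp C th t1 x + rinterp C th t2 x
  | RComp t1 t2 => fun x => rinterp C th t1 (rinterp C th t2 x)
  end.

(* Main.v *)
Require Import Defs.
From HB Require Import structures.
From mathcomp Require Import all_boot all_order all_algebra.
From Stdlib Require Import ClassicalEpsilon Classical.
Set Implicit Arguments. Unset Strict Implicit. Unset Printing Implicit Defensive.
Import GRing.Theory.
Local Open Scope ring_scope.


Section PE.
Variable K : fieldType.
Variable V : lmodType K.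
Variable th : {linear V -> V}.
Implicit Types p q : {poly K}.
Local Notation pe p := (peval p (th : V -> V)).

Lemma iter_linD i (x y : V) : iter i th (x + y) = iter i th x + iter i th y.
Proof. elim: i => //= i ->; by rewrite linearD. Qed.
Lemma iter_linZ i a (x : V) : iter i th (a *: x) = a *: iter i th x.
Proof. elim: i => //= i ->; by rewrite linearZ. Qed.
Lemma iter_lin0 i : iter i th 0 = 0 :> V.
Proof. elim: i => //= i ->; by rewrite linear0. Qed.

Lemma pe_widen p m x : (size p <= m)%N ->
  pe p x = \sum_(i < m) p`_i *: iter i th x.
Proof.
move=> hm; rewrite /peval (big_ord_widen m (fun i => p`_i *: iter i th x) hm).
rewrite big_mkcond /=; apply: eq_bigr => i _.
by case: ifP => // /negbT; rewrite -leqNgt => /(nth_default 0) ->; rewrite scale0r.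
Qed.

Lemma pe_add p q x : pe (p + q) x = pe p x + pe q x.
Proof.
rewrite !(@pe_widen _ (maxn (size p) (size q))) ?leq_maxl ?leq_maxr ?size_polyD //.
by rewrite -big_split /=; apply: eq_bigr => i _; rewrite coefD scalerDl.
Qed.

Lemma pe_scale c p x : pe (c *: p) x = c *: pe p x.
Proof.
rewrite !(@pe_widen _ (size p)) ?size_scale_leq //.
by rewrite scaler_sumr; apply: eq_bigr => i _; rewrite coefZ scalerA.
Qed.

Lemma pe_C c x : pe c%:P x = c *: x.
Proof.
rewrite (@pe_widen _ 1) ?size_polyC ?leq_b1 // big_ord1 coefC /=.
done.
Qed.

Lemma pe_opp p x : pe (- p) x = - pe p x.
Proof. by rewrite -(scaleN1r p) pe_scale scaleN1r. Qed.

Lemma pe_0 x : pe 0 x = 0.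
Proof. by rewrite /peval size_poly0 big_ord0. Qed.

Lemma pe_1 x : pe 1 x = x.
Proof. by rewrite pe_C scale1r. Qed.

Lemma pe_lin p : linear (pe p).
Proof.
move=> a x y; rewrite /peval scaler_sumr -big_split /=.
by apply: eq_bigr => i _; rewrite iter_linD iter_linZ scalerDr !scalerA mulrC.
Qed.

Lemma pe_D p x y : pe p (x + y) = pe p x + pe p y.
Proof. by have := pe_lin p 1 x y; rewrite !scale1r. Qed.
Lemma pe_Z p a x : pe p (a *: x) = a *: pe p x.
Proof.
rewrite /peval scaler_sumr; apply: eq_bigr => i _.
by rewrite iter_linZ !scalerA mulrC.
Qed.
Lemma pe_x0 p : pe p 0 = 0.
Proof. by have := pe_Z p 0 0; rewrite !scale0r. Qed.
Lemma pe_N p x : pe p (- x) = - pe p x.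
Proof. by rewrite -scaleN1r pe_Z scaleN1r. Qed.
Lemma pe_B p x y : pe p (x - y) = pe p x - pe p y.
Proof. by rewrite pe_D pe_N. Qed.
Lemma pe_sum p I (s : seq I) (P : pred I) (G : I -> V) :
  pe p (\sum_(i <- s | P i) G i) = \sum_(i <- s | P i) pe p (G i).
Proof. exact: (big_morph _ (pe_D p) (pe_x0 p)). Qed.

Lemma pe_th p x : pe p (th x) = th (pe p x).
Proof.
rewrite /peval linear_sum; apply: eq_bigr => i _.
by rewrite linearZ /= -iterSr -iterS.
Qed.

Lemma pe_mulX p x : pe (p * 'X) x = pe p (th x).
Proof.
rewrite (@pe_widen _ (size p).+1); last first.
  by have [->|pn0] := eqVneq p 0; [rewrite mul0r size_poly0|rewrite size_mulX].
rewrite big_ord_recl coefMX eqxx scale0r add0r /peval.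
by apply: eq_bigr => i _; rewrite coefMX /= add0n -iterS iterSr.
Qed.

Lemma pe_mul p q x : pe (p * q) x = pe p (pe q x).
Proof.
elim/poly_ind: p x => [|p c IH] x; first by rewrite mul0r !pe_0.
rewrite mulrDl -mulrA [_ * q]mulrC mulrA mul_polyC pe_add pe_scale pe_mulX IH.
by rewrite pe_add pe_mulX pe_C -pe_th.
Qed.

Lemma pe_comm p q x : pe p (pe q x) = pe q (pe p x).
Proof. by rewrite -!pe_mul mulrC. Qed.

End PE.


Section Fit.
Variable K : fieldType.
Variable V : lmodType K.
Variable th : {linear V -> V}.
Implicit Types p q : {poly K}.
Local Notation pe p := (peval p (th : V -> V)).

Definition ImP P (y : V) := exists w, pe P w = y.
Definition Fit P := (forall x, pe (P * P) x = 0 -> pe P x = 0) /\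
                    (forall x, exists y, pe P x = pe (P * P) y).

Lemma Fit1 : Fit 1.
Proof. split=> x; rewrite mulr1 //; by exists x. Qed.

Lemma Fit_mul p q : Fit p -> Fit q -> Fit (p * q).
Proof.
move=> [kp ip] [kq iq]; split=> x.
  rewrite mulrACA => h.
  have h1 : pe p (pe (q * q) x) = 0 by apply: kp; rewrite -pe_mul.
  by rewrite pe_mul pe_comm; apply: kq; rewrite pe_comm.
have [y ey] := iq x; have [z ez] := ip y.
exists z; rewrite [LHS]pe_mul ey pe_comm ez -pe_mul; congr (peval _ _ z).
by rewrite [RHS]mulrACA mulrC.

Qed.

Lemma ker_iter f c :
  (forall x, pe (f ^+ c.+1) x = 0 -> pe (f ^+ c) x = 0) ->
  forall m x, pe (f ^+ (c + m)) x = 0 -> pe (f ^+ c) x = 0.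
Proof.
move=> hk; elim=> [|m IH] x; first by rewrite addn0.
rewrite addnS -addSn exprD pe_mul => /hk; rewrite -pe_mul -exprD; exact: IH.
Qed.

Lemma im_iter f c :
  (forall x, exists y, pe (f ^+ c) x = pe (f ^+ c.+1) y) ->
  forall m x, exists y, pe (f ^+ c) x = pe (f ^+ (c + m)) y.
Proof.
move=> hi; elim=> [|m IH] x; first by exists x; rewrite addn0.
have [y ey] := IH x; have [z ez] := hi y.
exists z; rewrite ey addnC exprD pe_mul ez -pe_mul -exprD.
by rewrite addnS -addSn addnC.
Qed.

Lemma Fit_pow f c :
  (forall x, pe (f ^+ c.+1) x = 0 -> pe (f ^+ c) x = 0) ->
  (forall x, exists y, pe (f ^+ c) x = pe (f ^+ c.+1) y) -> Fit (f ^+ c).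
Proof.
move=> hk hi; split=> x; rewrite -exprD.
  exact: ker_iter.
exact: im_iter.
Qed.

Lemma ImP_pe P p y : ImP P y -> ImP P (pe p y).
Proof. by case=> w <-; exists (pe p w); rewrite pe_comm. Qed.
Lemma ImP_add P y z : ImP P y -> ImP P z -> ImP P (y + z).
Proof. by case=> w <- [w' <-]; exists (w + w'); rewrite pe_D. Qed.
Lemma ImP_0 P : ImP P 0.
Proof. by exists 0; rewrite pe_x0. Qed.
Lemma ImP_opp P y : ImP P y -> ImP P (- y).
Proof. by case=> w <-; exists (- w); rewrite pe_N. Qed.
Lemma ImP_sub P y z : ImP P y -> ImP P z -> ImP P (y - z).
Proof. by move=> a b; apply: ImP_add => //; apply: ImP_opp. Qed.
Lemma ImP_dvd P Q y : P %| Q -> ImP Q y -> ImP P y.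
Proof. by case/dvdpP=> R -> [w <-]; exists (pe R w); rewrite -pe_mul mulrC. Qed.

Lemma Fit_inter P y : Fit P -> ImP P y -> pe P y = 0 -> y = 0.
Proof. by move=> [k _] [w <-]; rewrite -pe_mul => /k. Qed.

Lemma proj_spec P x : Fit P ->
  ImP P (proj_im P th x) /\ pe P (x - proj_im P th x) = 0.
Proof.
move=> [k i]; rewrite /proj_im.
apply: (epsilon_spec (inhabits (0:V)) (fun u => ImP P u /\ pe P (x - u) = 0)).

have [y ey] := i x; exists (pe P y); split; first by exists y.
by rewrite pe_B -pe_mul -ey subrr.
Qed.

Lemma proj_uniq P x u : Fit P -> ImP P u -> pe P (x - u) = 0 ->
  proj_im P th x = u.
Proof.
move=> hF hu hk; have [h1 h2] := proj_spec x hF.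
apply/eqP; rewrite -subr_eq0; apply/eqP; apply: (Fit_inter hF).
  exact: ImP_sub.
by move: h2 hk; rewrite !pe_B => /eqP; rewrite subr_eq0 => /eqP <- /eqP; rewrite subr_eq0 => /eqP <-; rewrite subrr.
Qed.

Lemma proj_Im P x : Fit P -> ImP P x -> proj_im P th x = x.
Proof. by move=> hF hx; apply: proj_uniq => //; rewrite subrr pe_x0. Qed.
Lemma proj_Ker P x : Fit P -> pe P x = 0 -> proj_im P th x = 0.
Proof. by move=> hF hx; apply: proj_uniq => //; [apply: ImP_0|rewrite subr0]. Qed.
Lemma proj_D P x y : Fit P ->
  proj_im P th (x + y) = proj_im P th x + proj_im P th y.
Proof.
move=> hF; have [a1 b1] := proj_spec x hF; have [a2 b2] := proj_spec y hF.
apply: proj_uniq => //; first exact: ImP_add.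
by rewrite opprD addrACA pe_D b1 b2 addr0.
Qed.
Lemma proj_isIm P x : Fit P -> ImP P (proj_im P th x).
Proof. by move=> hF; case: (proj_spec x hF). Qed.
Lemma proj_isKer P x : Fit P -> pe P (x - proj_im P th x) = 0.
Proof. by move=> hF; case: (proj_spec x hF). Qed.
Lemma proj_pe P p x : Fit P -> proj_im P th (pe p x) = pe p (proj_im P th x).
Proof.
move=> hF; apply: proj_uniq => //; first exact/ImP_pe/proj_isIm.
by rewrite -pe_B pe_comm proj_isKer // pe_x0.
Qed.
End Fit.


Section PolyFacts.
Variable K : fieldType.
Implicit Types p q f g : {poly K}.

Lemma irr_coprime f p : irreducible_poly f -> ~~ (f %| p) -> coprimep f p.
Proof.
move=> hf hn; have [h|h] := irredp_XsubCP hf (dvdp_gcdl f p).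
  by rewrite coprimep_def (eqp_size h) size_poly1.
by move: hn; rewrite -(eqp_dvdl _ h) dvdp_gcdr.
Qed.

Lemma mirr_coprime f g : mirr f -> mirr g -> f != g -> coprimep f g.
Proof.
move=> [mf If] [mg Ig] ne; apply: irr_coprime => //; apply/negP => d.
have [h|h] := irredp_XsubCP Ig d.
  by move: (eqp_size h) If.1; rewrite size_poly1 => ->.
by move: ne; rewrite -eqp_monic ?h.
Qed.

Lemma coprime_prod (I : eqType) (s : seq I) (P : pred I) (F : I -> {poly K}) p :
  (forall i, i \in s -> P i -> coprimep p (F i)) ->
  coprimep p (\prod_(i <- s | P i) F i).
Proof.
move=> h; rewrite big_seq_cond; apply: (big_ind (coprimep p)).
- exact: coprimep1.
- by move=> a b ha hb; rewrite coprimepMr ha hb.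
by move=> i /andP[/h].
Qed.

Lemma irr_monic_of f : irreducible_poly f -> mirr ((lead_coef f)^-1 *: f).
Proof.
move=> hf; have fn0 := irredp_neq0 hf.
have cn0 : (lead_coef f)^-1 != 0 by rewrite invr_eq0 lead_coef_eq0.
have e := eqp_scale f cn0.
split; first by rewrite monicE lead_coefZ mulVf // lead_coef_eq0.
split; first by rewrite (eqp_size e); exact: hf.1.
move=> q sq; rewrite (eqp_dvdr _ e) => /hf h; apply: eqp_trans (h sq) _; by rewrite eqp_sym.
Qed.

Lemma exists_irr_div p : (1 < size p)%N -> exists f, mirr f /\ f %| p.
Proof.
move: {2}(size p) (leqnn (size p)) => n; elim: n p => [|n IH] p hs hp.
  by move: (leq_trans hp hs).
have [hi|hni] := classic (irreducible_poly p).
  exists ((lead_coef p)^-1 *: p); split; first exact: irr_monic_of.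
  by rewrite dvdpZl // invr_eq0 lead_coef_eq0 -size_poly_gt0 (ltn_trans _ hp).
have pn0 : p != 0 by rewrite -size_poly_gt0 (ltn_trans _ hp).
have [q [sq [dq nq]]] : exists q, size q != 1%N /\ q %| p /\ ~ (q %= p).
  apply: NNPP => hn; apply: hni; split => // q sq dq.
  by apply: NNPP => nq; apply: hn; exists q.
have qn0 : q != 0 by apply: contraTneq dq => ->; rewrite dvd0p.
have lq := dvdp_leq pn0 dq.
have nsq : size q != size p by rewrite dvdp_size_eqp //; apply/negP.
have h1 : (size q <= n)%N by rewrite -ltnS (leq_trans _ hs) // ltn_neqAle nsq lq.
have h2 : (1 < size q)%N.
  by move: sq qn0; rewrite -size_poly_gt0; case: (size q) => [|[]].
have [f [hf df]] := IH q h1 h2.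
by exists f; split => //; apply: dvdp_trans dq.
Qed.

Lemma Fac_exists p : p != 0 ->
  exists s, uniq s /\ forall f, f \in s <-> (mirr f /\ f %| p).
Proof.
move: {2}(size p) (leqnn (size p)) => n; elim: n p => [|n IH] p hs pn0.
  by move: hs; rewrite leqn0 size_poly_eq0 (negPf pn0).
have [hp|hp] := leqP (size p) 1.
  exists [::]; split => // f; split => // [[[_ [sf _]] df]].
  by move: (leq_trans (dvdp_leq pn0 df) hp); rewrite leqNgt sf.
have [f [hf df]] := exists_irr_div hp.
have fn0 : f != 0 by exact: irredp_neq0 hf.2.
set p' := p %/ f; have ep : f * p' = p by rewrite divpKC.
have p'n0 : p' != 0 by apply: contraTneq pn0 => e; rewrite -ep e mulr0 eqxx.
have hsz : (size p' <= n)%N.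
  move: hs; rewrite -ep size_mul //; have := hf.2.1.
  case: (size f) => [|[|k]] //= _; rewrite addSn ltnS => h; apply: leq_trans h; apply: leq_addl.
have [s [us hs']] := IH p' hsz p'n0.
exists (undup (f :: s)); split; first exact: undup_uniq.
move=> g; rewrite mem_undup in_cons; split.
  case/orP=> [/eqP -> //|/hs' [mg dg]]; split=> //.
  by rewrite -ep dvdp_mull.
move=> [mg dg]; have [->|ne] := eqVneq g f; first by [].
apply/orP; right; apply/hs'; split => //.
by rewrite -(Gauss_dvdpr _ (mirr_coprime mg hf ne)) ep.
Qed.

Lemma Fac_spec p : p != 0 ->
  uniq (Fac p) /\ forall f, f \in Fac p <-> (mirr f /\ f %| p).
Proof.
move=> pn0; rewrite /Fac.
apply: (epsilon_spec (inhabits [::]) (fun s => uniq s /\ forall f, f \in s <-> (mirr f /\ f %| p))).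
exact: Fac_exists.
Qed.

End PolyFacts.


Section PowC.
Variable K : fieldType.
Variable C : kconf K.
Implicit Types p q f g : {poly K}.

Lemma Cn_some f c : Cval C f = Some c -> Cn C f = c.
Proof. by rewrite /Cn => ->. Qed.

Lemma mirr_dvd_mul f p q : mirr f -> f %| p * q -> f %| p \/ f %| q.
Proof.
move=> hf d; have [h|h] := boolP (f %| p); first by left.
by right; rewrite -(Gauss_dvdpr _ (irr_coprime hf.2 h)).
Qed.

Lemma powC_dvd_elt s f : f \in s -> f ^+ Cn C f %| powC C s.
Proof. by move=> hf; rewrite /powC (big_rem _ hf) /= dvdp_mulr. Qed.

Lemma powC_splitF s F : uniq s -> uniq F ->
  (forall g, g \in s -> Cn C g != 0%N -> g \in F) ->
  powC C F = powC C s * \prod_(g <- F | g \notin s) g ^+ Cn C g.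
Proof.
move=> us uF hs; rewrite /powC (bigID (fun g => g \in s)) /=; congr (_ * _).
rewrite -big_filter.
have -> : \prod_(i <- s) i ^+ Cn C i = \prod_(i <- s | i \in F) i ^+ Cn C i.
  rewrite [RHS]big_mkcond /=; apply: eq_big_seq => g gs.
  case: ifP => // /negbT gF; have : ~~ (Cn C g != 0%N) by apply: contra gF; exact: hs.
  by rewrite negbK => /eqP ->; rewrite expr0.
rewrite -[RHS]big_filter; apply: perm_big; apply: uniq_perm; rewrite ?filter_uniq //.
by move=> g; rewrite !mem_filter andbC.
Qed.

Lemma powC_coprime s F :
  (forall g, g \in s -> mirr g) -> (forall g, g \in F -> mirr g) ->
  coprimep (powC C s) (\prod_(g <- F | g \notin s) g ^+ Cn C g).
Proof.
move=> ms mF; apply: coprime_prod => g gF gs; rewrite coprimep_sym.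
apply: coprime_prod => h hs _; apply: coprimep_expl; apply: coprimep_expr.
by apply: mirr_coprime; [exact: mF|exact: ms|apply: contraNneq gs => ->].
Qed.

Lemma powC_dvd s F : uniq s -> uniq F ->
  (forall g, g \in s -> Cn C g != 0%N -> g \in F) -> powC C s %| powC C F.
Proof. by move=> us uF hs; rewrite (powC_splitF us uF hs) dvdp_mulr. Qed.

Lemma Csupport_split s f c : Csupport C s -> mirr f -> Cval C f = Some c ->
  exists R, powC C s = f ^+ c * R /\ coprimep f R.
Proof.
move=> [us hs] mf hc.
have ms g : g \in s -> mirr g by move/hs=> [].
have [fs|fs] := boolP (f \in s).
  exists (\prod_(g <- rem f s) g ^+ Cn C g); split.
    by rewrite /powC (big_rem _ fs) (Cn_some hc).
  apply: coprime_prod => g gs _; apply: coprimep_expr; apply: mirr_coprime => //.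
    by apply: ms; apply: (mem_rem gs).
  by apply: contraTneq gs => <-; rewrite mem_rem_uniqF.
have c0 : c = 0%N.
  apply: NNPP => nc; move/negP: fs; apply; apply/(hs f); split => //; rewrite hc.
  by case=> e; apply: nc.
exists (powC C s); rewrite c0 expr0 mul1r; split => //.
apply: coprime_prod => g gs _; apply: coprimep_expr; apply: mirr_coprime => //.
  exact: ms.
by apply: contraNneq fs => ->.
Qed.

End PowC.

Section CFacts.
Variable K : fieldType.
Variable V : lmodType K.
Variable th : {linear V -> V}.
Variable C : kconf K.
Hypothesis wf : kconf_wf C.
Hypothesis HC : C_img_complete C th.
Implicit Types p q f g : {poly K}.
Local Notation pe p := (peval p (th : V -> V)).

Lemma kerC f c : mirr f -> Cval C f = Some c ->
  forall x, pe (f ^+ c.+1) x = 0 -> pe (f ^+ c) x = 0.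
Proof.
move=> mf hc x hx; case: HC => He _; move: He wf; rewrite /C_endo /kconf_wf.
case: (Cdeg C) => [d|]; last by move=> He _; apply/(He f c mf hc x).
move=> He [_ [s [hs _]]]; have [R [eM cop]] := Csupport_split hs mf hc.
have hM := He s hs; have [[u v] /= e] := Bezout_eq1_coprimepP _ _ cop.
rewrite -[pe (f ^+ c) x](@pe_1 _ _ th) -e pe_add !pe_mul -[pe f _]pe_mul -exprS hx pe_x0 add0r.
by rewrite -[pe R _]pe_mul mulrC -eM hM pe_x0.
Qed.

Lemma imC f c : mirr f -> Cval C f = Some c ->
  forall x, exists y, pe (f ^+ c) x = pe (f ^+ c.+1) y.
Proof.
move=> mf hc x; case: HC => _ /(_ f c mf hc (pe (f ^+ c) x)) [_ h].
by have [y ey] := h (ex_intro _ x erefl); exists y.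
Qed.

Lemma FitC f c : mirr f -> Cval C f = Some c -> Fit th (f ^+ c).
Proof. by move=> mf hc; apply: Fit_pow; [exact: kerC|exact: imC]. Qed.

Lemma Fit_powC s : (forall f, f \in s -> mirr f /\ exists c, Cval C f = Some c) ->
  Fit th (powC C s).
Proof.
move=> hs; rewrite /powC big_seq; apply: (big_ind (Fit th)).
- exact: Fit1.
- exact: Fit_mul.
by move=> f /hs [mf [c hc]]; rewrite (Cn_some hc); exact: FitC.
Qed.

Definition good_for Q e := forall f, mirr f -> f %| e ->
  exists c, Cval C f = Some c /\ f ^+ c %| Q.

Lemma good_for_dvd Q e e' : e' %| e -> good_for Q e -> good_for Q e'.
Proof. by move=> d h f mf df; apply: h => //; apply: dvdp_trans d. Qed.

Lemma good_ind (P : {poly K} -> Prop) :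
  (forall c, c != 0 -> P c%:P) ->
  (forall f e, mirr f -> e != 0 -> P e -> P (e * f)) ->
  forall e, e != 0 -> P e.
Proof.
move=> h0 hS e; move: {2}(size e) (leqnn (size e)) => n.
elim: n e => [|n IH] e hs en0.
  by move: hs; rewrite leqn0 size_poly_eq0 (negPf en0).
have [hp|hp] := leqP (size e) 1.
  rewrite (size1_polyC hp); apply: h0; move: en0; rewrite {1}(size1_polyC hp).
  by rewrite polyC_eq0.
have [f [hf df]] := exists_irr_div hp.
have fn0 : f != 0 by exact: irredp_neq0 hf.2.
set e' := e %/ f; have ep : e' * f = e by rewrite divpK.
have e'n0 : e' != 0 by apply: contraTneq en0 => h; rewrite -ep h mul0r eqxx.
rewrite -ep; apply: hS => //; apply: IH => //.
move: hs; rewrite -ep size_mul //; have := hf.2.1.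
case: (size f) => [|[|k]] //= _; rewrite !addnS /= ltnS; apply: leq_trans.
exact: leq_addr.
Qed.

Lemma good_inj Q e : e != 0 -> good_for Q e ->
  forall y, ImP th Q y -> pe e y = 0 -> y = 0.
Proof.
move: e; apply: (good_ind (P := fun e => good_for Q e ->
  forall y, ImP th Q y -> pe e y = 0 -> y = 0)) => [c cn0|f e mf en0 IH] hg y hy.
  by rewrite pe_C => /eqP; rewrite scaler_eq0 (negPf cn0) => /eqP.
rewrite pe_mul => h.
have hfy : pe f y = 0.
  apply: (IH _ (pe f y)) => //; last exact: ImP_pe.
  by apply: good_for_dvd hg; apply: dvdp_mulr.
have [c [hc dQ]] := hg f mf (dvdp_mull _ (dvdpp f)).
have : ImP th (f ^+ c) y by apply: ImP_dvd dQ hy.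
case=> w ew; move: hfy; rewrite -ew -pe_mul -exprS => /(kerC mf hc).
by [].
Qed.

Lemma good_surj Q e : e != 0 -> good_for Q e ->
  forall y, ImP th Q y -> exists u, ImP th Q u /\ pe e u = y.
Proof.
move: e; apply: (good_ind (P := fun e => good_for Q e ->
  forall y, ImP th Q y -> exists u, ImP th Q u /\ pe e u = y)) => [c cn0|f e mf en0 IH] hg y hy.
  exists (c^-1 *: y); split; first by case: hy => w <-; exists (c^-1 *: w); rewrite pe_Z.
  by rewrite pe_C scalerA mulfV // scale1r.
have [u' [hu' eu']] := IH (good_for_dvd (dvdp_mulr _ (dvdpp e)) hg) y hy.
have [c [hc /dvdpP [R eQ]]] := hg f mf (dvdp_mull _ (dvdpp f)).
case: hu' => w ew; have [z ez] := imC mf hc w.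
exists (pe Q z); split; first by exists z.
rewrite pe_mul -eu' -ew; congr (pe e _); rewrite eQ [RHS]pe_mul ez -!pe_mul.
by rewrite exprS mulrCA.
Qed.

Lemma inv_eval_spec e x u : e \is monic ->
  (forall f, mirr f -> f %| e -> exists k, Cval C f = Some k) ->
  ImP th (powC C (Fac e)) u -> pe e u = pi_Im C (Fac e) th x ->
  inv_eval C e th x = u.
Proof.
move=> me hfin hu heu; have en0 : e != 0 by apply: monic_neq0.
have [uF hF] := Fac_spec en0.
have hg : good_for (powC C (Fac e)) e.
  move=> f mf df; have [k hk] := hfin f mf df; exists k; split => //.
  by rewrite -(Cn_some hk); apply: powC_dvd_elt; apply/hF.
rewrite /inv_eval.
set Pr := (fun u => ImP th (powC C (Fac e)) u /\ pe e u = pi_Im C (Fac e) th x).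
have [h1 h2] : Pr (epsilon (inhabits 0) Pr) by apply: epsilon_spec; exists u.
apply/eqP; rewrite -subr_eq0; apply/eqP; apply: (good_inj en0 hg).
  exact: ImP_sub.
by rewrite pe_B h2 heu subrr.
Qed.

End CFacts.


Section Good.
Variable K : fieldType.
Variable C : kconf K.
Variable F : seq {poly K}.
Implicit Types p q f g b : {poly K}.

Definition goodF b := b \is monic /\
  forall f, mirr f -> f %| b -> f \in F \/ Cval C f = Some 0%N.

Lemma goodF1 : goodF 1.
Proof.
split; first exact: monic1.
by move=> f [_ [sf _]]; rewrite dvdp1 => /eqP e; move: sf; rewrite e.
Qed.

Lemma goodF_mul b1 b2 : goodF b1 -> goodF b2 -> goodF (b1 * b2).
Proof.
move=> [m1 h1] [m2 h2]; split; first by rewrite monicMl.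
by move=> f mf /(mirr_dvd_mul mf) [/(h1 _ mf)|/(h2 _ mf)].
Qed.
End Good.

Section NF.
Variable K : fieldType.
Variable V : lmodType K.
Variable th : {linear V -> V}.
Variable C : kconf K.
Variable F : seq {poly K}.
Hypothesis wf : kconf_wf C.
Hypothesis HC : C_img_complete C th.
Hypothesis hF : fin_sub_irr C F.
Implicit Types p q f g b : {poly K}.
Local Notation pe p := (peval p (th : V -> V)).
Local Notation P := (powC C F).
Local Notation piW x := (pi_Im C F th x).
Local Notation piN x := (x - pi_Im C F th x).
Local Notation W := (ImP th (powC C F)).

Lemma mF f : f \in F -> mirr f /\ exists k, Cval C f = Some k.+1.
Proof. by move/(hF.2). Qed.

Lemma FitP : Fit th P.
Proof. by apply: Fit_powC => // f /mF [mf [k hk]]; split => //; exists k.+1. Qed.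

Lemma goodF_for b : goodF C F b -> good_for C P b.
Proof.
move=> [_ hb] f mf df; have [fF|h0] := hb f mf df.
  have [_ [k hk]] := mF fF; exists k.+1; split => //.
  by rewrite -(Cn_some hk); apply: powC_dvd_elt.
by exists 0%N; split => //; rewrite expr0 dvd1p.
Qed.

Lemma goodF_fin b : goodF C F b -> forall f, mirr f -> f %| b -> exists k, Cval C f = Some k.
Proof. by move=> gb f mf df; have [k [hk _]] := goodF_for gb mf df; exists k. Qed.

Lemma piW_W x : W (piW x).
Proof. exact: (proj_isIm x FitP). Qed.
Lemma piN_ker x : pe P (piN x) = 0.
Proof. exact: (proj_isKer x FitP). Qed.
Lemma piW_uniq w k : W w -> pe P k = 0 -> piW (w + k) = w.
Proof. by move=> hw hk; apply: proj_uniq FitP hw _; rewrite addrC addKr. Qed.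

Lemma invW_spec b y : goodF C F b -> W y ->
  W (inv_eval C b th y) /\ pe b (inv_eval C b th y) = y.
Proof.
move=> gb hy; have bn0 : b != 0 by apply: monic_neq0; case: gb.
have [u [hu eu]] := good_surj HC bn0 (goodF_for gb) hy.
suff -> : inv_eval C b th y = u by [].
have [uF hFac] := Fac_spec bn0.
have dQ : powC C (Fac b) %| P.
  apply: powC_dvd => //; first exact: hF.1.
  move=> g /hFac [mg dg]; case: (gb.2 g mg dg) => // h; rewrite (Cn_some h).
  by rewrite eqxx.
have FQ : Fit th (powC C (Fac b)).
  apply: Fit_powC => // g /hFac [mg dg]; split => //; exact: goodF_fin gb g mg dg.
apply: inv_eval_spec => //; first by case: gb.
- exact: goodF_fin.
- exact: ImP_dvd dQ hu.
by rewrite eu /pi_Im proj_Im //; apply: ImP_dvd dQ hy.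
Qed.

Lemma invW_uniq b y u : goodF C F b -> W y -> W u -> pe b u = y ->
  inv_eval C b th y = u.
Proof.
move=> gb hy hu e; have bn0 : b != 0 by apply: monic_neq0; case: gb.
have [h1 h2] := invW_spec gb hy.
apply/eqP; rewrite -subr_eq0; apply/eqP.
apply: (good_inj wf HC bn0 (goodF_for gb)); first exact: ImP_sub.
by rewrite pe_B h2 e subrr.
Qed.

Lemma invW1 y : W y -> inv_eval C 1 th y = y.
Proof. by move=> hy; apply: invW_uniq => //; [exact: goodF1|rewrite pe_1]. Qed.

Lemma nf_poly p x : pe p x = pe p (inv_eval C 1 th (piW x)) + pe p (piN x).
Proof.
rewrite (invW1 (piW_W x)); transitivity (pe p (piW x + piN x)); first by rewrite addrC subrK.
exact: pe_D.
Qed.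

Lemma projQ Q R a b x : Q * R = P -> a * Q + b * R = 1 -> Fit th Q ->
  proj_im Q th x = piW x + pe (a * Q) (piN x).
Proof.
move=> eP eB FQ; apply: proj_uniq => //.
  apply: ImP_add; first by apply: ImP_dvd (piW_W x); rewrite -eP dvdp_mulr.
  by exists (pe a (piN x)); rewrite -pe_mul mulrC.
have -> : x - (piW x + pe (a * Q) (piN x)) = pe (b * R) (piN x).
  set k := piN x.
  have ek : pe (b * R) k = k - pe (a * Q) k.
    by rewrite -[X in X - _](@pe_1 _ _ th) -eB pe_add addrC addKr.
  by rewrite ek opprD addrA.
by rewrite -pe_mul mulrCA eP pe_mul piN_ker pe_x0.
Qed.

Lemma nf_proj Q R a b x : Q * R = P -> a * Q + b * R = 1 -> Fit th Q ->
  proj_im Q th x = pe 1 (inv_eval C 1 th (piW x)) + pe (a * Q) (piN x).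
Proof. by move=> eP eB FQ; rewrite (projQ x eP eB FQ) pe_1 (invW1 (piW_W x)). Qed.

Lemma nf_inv e R a b c d x : e \is monic -> goodF C F e ->
  powC C (Fac e) * R = P -> a * powC C (Fac e) + b * R = 1 ->
  c * e + d * R = 1 ->
  inv_eval C e th x = pe 1 (inv_eval C e th (piW x)) +
                      pe (c * a * powC C (Fac e)) (piN x).
Proof.
move=> me ge eP eB eC; have en0 : e != 0 by apply: monic_neq0.
have [uF hFac] := Fac_spec en0.
set Q := powC C (Fac e).
have FQ : Fit th Q.
  apply: Fit_powC => // g /hFac [mg dg]; split => //; exact: goodF_fin ge g mg dg.
have [h1 h2] := invW_spec ge (piW_W x).
rewrite pe_1; apply: inv_eval_spec => //.
- exact: goodF_fin.
- apply: ImP_add; first by apply: ImP_dvd h1; rewrite -eP dvdp_mulr.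
  by exists (pe (c * a) (piN x)); rewrite -pe_mul mulrC.
rewrite /pi_Im (projQ x eP eB FQ) pe_D h2; congr (_ + _).
rewrite -pe_mul !mulrA [e * c]mulrC.
have -> : c * e = 1 - d * R by rewrite -eC addrK.
rewrite mulrBl mul1r mulrBl pe_add pe_opp.
have -> : d * R * a * Q = (d * a) * P.
  by rewrite -eP -!mulrA; congr (_ * _); rewrite mulrCA; congr (_ * _); exact: mulrC.
by rewrite pe_mul piN_ker pe_x0 oppr0 addr0.
Qed.

Lemma frac_add a1 b1 a2 b2 y : goodF C F b1 -> goodF C F b2 -> W y ->
  pe a1 (inv_eval C b1 th y) + pe a2 (inv_eval C b2 th y) =
  pe (a1 * b2 + a2 * b1) (inv_eval C (b1 * b2) th y).
Proof.
move=> g1 g2 hy; have g12 := goodF_mul g1 g2.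
have [hu eu] := invW_spec g12 hy; set u := inv_eval C (b1 * b2) th y in hu eu *.
rewrite (@invW_uniq b1 y (pe b2 u)) //; last by rewrite -pe_mul.
  rewrite (@invW_uniq b2 y (pe b1 u)) //; last by rewrite -pe_mul mulrC.
    by rewrite pe_add !pe_mul.
  exact: ImP_pe.
exact: ImP_pe.
Qed.

Lemma frac_comp a1 b1 a2 b2 y : goodF C F b1 -> goodF C F b2 -> W y ->
  pe a1 (inv_eval C b1 th (pe a2 (inv_eval C b2 th y))) =
  pe (a1 * a2) (inv_eval C (b1 * b2) th y).
Proof.
move=> g1 g2 hy; have g12 := goodF_mul g1 g2.
have [hu eu] := invW_spec g12 hy; set u := inv_eval C (b1 * b2) th y in hu eu *.
rewrite (@invW_uniq b2 y (pe b1 u)) //; first last.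
- by rewrite -pe_mul mulrC.
- exact: ImP_pe.
rewrite pe_comm (@invW_uniq b1 _ (pe a2 u)) //.
- by rewrite pe_mul.
- exact/ImP_pe/ImP_pe.
- exact: ImP_pe.
Qed.

Lemma frac_eq a b A E y : goodF C F b -> goodF C F E -> a * E = A * b -> W y ->
  pe a (inv_eval C b th y) = pe A (inv_eval C E th y).
Proof.
move=> gb gE eq hy; have gbE := goodF_mul gb gE.
have bEn0 : b * E != 0 by apply: monic_neq0; case: gbE.
have [h1 e1] := invW_spec gb hy; have [h2 e2] := invW_spec gE hy.
apply/eqP; rewrite -subr_eq0; apply/eqP.
apply: (good_inj wf HC bEn0 (goodF_for gbE)).
  by apply: ImP_sub; apply: ImP_pe.
rewrite pe_B; apply/eqP; rewrite subr_eq0; apply/eqP.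
have -> : pe (b * E) (pe a (inv_eval C b th y)) = pe (a * E) y.
  by rewrite pe_comm mulrC !pe_mul e1.
have -> : pe (b * E) (pe A (inv_eval C E th y)) = pe (A * b) y.
  by rewrite pe_comm !pe_mul e2.
by rewrite eq.
Qed.

Lemma nf_split T a b s x : goodF C F b ->
  T = pe a (inv_eval C b th (piW x)) + pe s (piN x) ->
  piW T = pe a (inv_eval C b th (piW x)) /\ piN T = pe s (piN x).
Proof.
move=> gb ->; have [h1 _] := invW_spec gb (piW_W x).
have e : piW (pe a (inv_eval C b th (piW x)) + pe s (piN x)) =
         pe a (inv_eval C b th (piW x)).
  apply: piW_uniq; first exact: ImP_pe.
  by rewrite pe_comm piN_ker pe_x0.
by rewrite e addrC addKr.
Qed.

End NF.


Section Ker.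
Variable K : fieldType.
Variable V : lmodType K.
Variable th : {linear V -> V}.
Variable C : kconf K.
Hypothesis wf : kconf_wf C.
Hypothesis HC : C_img_complete C th.
Implicit Types p q f g b : {poly K}.
Local Notation pe p := (peval p (th : V -> V)).

Lemma powC1 f : powC C [:: f] = f ^+ Cn C f.
Proof. by rewrite /powC big_seq1. Qed.

Lemma ker_decomp L : uniq L ->
  (forall f, f \in L -> mirr f /\ exists c, Cval C f = Some c) ->
  forall k, pe (powC C L) k = 0 ->
  k = \sum_(f <- L) (k - proj_im (powC C [:: f]) th k).
Proof.
elim: L => [|f L IH] uL hL k hk.
  by move: hk; rewrite /powC big_nil pe_1 big_nil.
move: uL => /= /andP [fL uL].
have hL' g : g \in L -> mirr g /\ exists c, Cval C g = Some c.
  by move=> gL; apply: hL; rewrite in_cons gL orbT.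
have [mf _] := hL f (mem_head _ _).
set Q := powC C L; set qf := f ^+ Cn C f.
have eP : powC C (f :: L) = qf * Q by rewrite /powC big_cons.
have cop : coprimep qf Q.
  apply: coprimep_expl; apply: coprime_prod => g gL _; apply: coprimep_expr.
  apply: mirr_coprime => //; first by case: (hL' g gL).
  by apply: contraNneq fL => ->.
have [[a b] /= e] := Bezout_eq1_coprimepP _ _ cop.
set k1 := pe (a * qf) k; set k2 := pe (b * Q) k.
have ek : k = k1 + k2 by rewrite -pe_add e pe_1.
have Ff : Fit th (powC C [:: f]).
  by apply: Fit_powC => // g; rewrite inE => /eqP ->; apply: hL; apply: mem_head.
have A : k - proj_im (powC C [:: f]) th k = k2.
  have -> : proj_im (powC C [:: f]) th k = k1.
    apply: proj_uniq => //; first by rewrite powC1; exists (pe a k); rewrite -pe_mul mulrC.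
    rewrite {1}ek addrC addKr powC1 -pe_mul mulrCA -/qf -eP pe_mul hk.
    by rewrite pe_x0.
  by rewrite {1}ek addrC addKr.
have B g : g \in L -> k - proj_im (powC C [:: g]) th k =
                      k1 - proj_im (powC C [:: g]) th k1.
  move=> gL; have Fg : Fit th (powC C [:: g]).
    by apply: Fit_powC => // h; rewrite inE => /eqP ->; apply: hL'.
  rewrite {1 2}ek proj_D // [proj_im _ _ k2]proj_Im //.
    by rewrite opprD addrACA subrr addr0.
  apply: (@ImP_dvd _ _ th _ (b * Q)); last by exists k.
  by rewrite powC1 dvdp_mull // powC_dvd_elt.
have hk1 : pe Q k1 = 0.
  by rewrite -pe_mul mulrA mulrC mulrA -eP [_ * a]mulrC pe_mul hk pe_x0.
rewrite big_cons A (eq_big_seq _ B) -(IH uL hL' k1 hk1) addrC.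
exact: ek.
Qed.

Lemma ker_final F s x : fin_sub_irr C F ->
  pe s (x - pi_Im C F th x) =
  \sum_(f <- F) pe (s %% f ^+ Cn C f) (pi_Ker C [:: f] th x).
Proof.
move=> hF; set k := x - pi_Im C F th x.
have hk : pe (powC C F) k = 0 by exact: piN_ker wf HC hF x.
have hF' f : f \in F -> mirr f /\ exists c, Cval C f = Some c.
  by move=> /(hF.2) [mf [c hc]]; split => //; exists c.+1.
rewrite {1}(ker_decomp hF.1 hF' hk) pe_sum; apply: eq_big_seq => f fF.
have Ff : Fit th (powC C [:: f]).
  by apply: Fit_powC => // g; rewrite inE => /eqP ->; apply: hF'.
have -> : pi_Ker C [:: f] th x = k - proj_im (powC C [:: f]) th k.
  have hW : ImP th (powC C [:: f]) (pi_Im C F th x).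
    apply: ImP_dvd (piW_W wf HC hF x); rewrite powC1; exact: powC_dvd_elt.
  have e1 : proj_im (powC C [:: f]) th x =
            pi_Im C F th x + proj_im (powC C [:: f]) th k.
    transitivity (proj_im (powC C [:: f]) th (pi_Im C F th x + k)).
      by rewrite /k addrC subrK.
    by rewrite proj_D // proj_Im.
  change (x - proj_im (powC C [:: f]) th x = k - proj_im (powC C [:: f]) th k).
  by rewrite e1 opprD addrA.
set z := k - _.
have hz : pe (f ^+ Cn C f) z = 0 by rewrite -powC1; exact: proj_isKer.
by rewrite {1}(divp_eq s (f ^+ Cn C f)) pe_add pe_mul hz pe_x0 add0r.
Qed.

End Ker.


Section Terms.
Variable K : fieldType.
Implicit Types p q f g b : {poly K}.

Fixpoint fr (t : rterm K) : {poly K} * {poly K} :=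
  match t with
  | RPoly p => (p, 1)
  | RProjIm _ => (1, 1)
  | RInv e => (1, e)
  | RAdd t1 t2 => ((fr t1).1 * (fr t2).2 + (fr t2).1 * (fr t1).2,
                   (fr t1).2 * (fr t2).2)
  | RComp t1 t2 => ((fr t1).1 * (fr t2).1, (fr t1).2 * (fr t2).2)
  end.

Definition posC (C : kconf K) f : bool :=
  if Cval C f is Some (S _) then true else false.

Fixpoint needed (C : kconf K) (t : rterm K) : seq {poly K} :=
  match t with
  | RPoly _ => [::]
  | RProjIm F' => F'
  | RInv e => [seq f <- Fac e | posC C f]
  | RAdd t1 t2 => needed C t1 ++ needed C t2
  | RComp t1 t2 => needed C t1 ++ needed C t2
  end.

Lemma posCP C f : posC C f -> exists k, Cval C f = Some k.+1.
Proof. by rewrite /posC; case: (Cval C f) => [[|k]|] // _; exists k. Qed.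

Lemma needed_ok C t : rvalid C t ->
  forall f, f \in needed C t -> mirr f /\ exists k, Cval C f = Some k.+1.
Proof.
elim: t => [p|F'|e|t1 IH1 t2 IH2|t1 IH1 t2 IH2] /=.
- by [].
- by move=> hF f /(hF.2).
- move=> [me _] f; rewrite mem_filter => /andP [/posCP hk hf].
  by have [_ /(_ f) [/(_ hf) [mf _] _]] := Fac_spec (monic_neq0 me).
- by move=> [v1 v2] f; rewrite mem_cat => /orP [/(IH1 v1)|/(IH2 v2)].
- by move=> [v1 v2] f; rewrite mem_cat => /orP [/(IH1 v1)|/(IH2 v2)].
Qed.

Lemma fr_good C F t : rvalid C t -> {subset needed C t <= F} ->
  goodF C F (fr t).2.
Proof.
elim: t => [p|F'|e|t1 IH1 t2 IH2|t1 IH1 t2 IH2] /=.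
- by move=> _ _; exact: goodF1.
- by move=> _ _; exact: goodF1.
- move=> [me hfin] sub; split => // f mf df.
  have [[|k] hk] := hfin f mf df; first by right.
  left; apply: sub; rewrite mem_filter /posC hk /=.
  by have [_ /(_ f) [_ ->]] := Fac_spec (monic_neq0 me).
- move=> [v1 v2] sub; apply: goodF_mul.
    by apply: IH1 => // f hf; apply: sub; rewrite mem_cat hf.
  by apply: IH2 => // f hf; apply: sub; rewrite mem_cat hf orbT.
- move=> [v1 v2] sub; apply: goodF_mul.
    by apply: IH1 => // f hf; apply: sub; rewrite mem_cat hf.
  by apply: IH2 => // f hf; apply: sub; rewrite mem_cat hf orbT.
Qed.

Lemma term_nf C F t : kconf_wf C -> fin_sub_irr C F -> rvalid C t ->
  {subset needed C t <= F} ->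
  exists s : {poly K}, forall (V : lmodType K) (th : {linear V -> V}),
    C_img_complete C th -> forall x,
    rinterp C th t x =
      peval (fr t).1 th (inv_eval C (fr t).2 th (pi_Im C F th x)) +
      peval s th (x - pi_Im C F th x).
Proof.
move=> wf hF; have mFF g : g \in F -> mirr g by move/(hF.2) => [].
elim: t => [p|F'|e|t1 IH1 t2 IH2|t1 IH1 t2 IH2] /=.
- move=> _ _; exists p => V th HC x; exact: nf_poly.
- move=> hF' sub.
  have eP := powC_splitF (C:=C) hF'.1 hF.1 (fun g gF' _ => sub g gF').
  have cop := @powC_coprime _ C F' F (fun g h => (hF'.2 g h).1) mFF.
  have [[a b] /= e] := Bezout_eq1_coprimepP _ _ cop.
  exists (a * powC C F') => V th HC x.
  apply: (nf_proj wf HC hF x (esym eP) e).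
  by apply: Fit_powC => // g /(hF'.2) [mg [k hk]]; split => //; exists k.+1.
- move=> [me hfin] sub.
  have en0 := monic_neq0 me; have [uF hFac] := Fac_spec en0.
  have hs g : g \in Fac e -> Cn C g != 0%N -> g \in F.
    move=> /hFac [mg dg]; have [[|k] hk] := hfin g mg dg; first by rewrite (Cn_some hk).
    by move=> _; apply: sub; rewrite mem_filter /posC hk /=; apply/hFac.
  have eP := powC_splitF (C:=C) uF hF.1 hs.
  have cop := @powC_coprime _ C (Fac e) F (fun g h => (proj1 (hFac g) h).1) mFF.
  have [[a b] /= eB] := Bezout_eq1_coprimepP _ _ cop.
  have cop2 : coprimep e (\prod_(g <- F | g \notin Fac e) g ^+ Cn C g).
    apply: coprime_prod => g gF gn; apply: coprimep_expr; rewrite coprimep_sym.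
    apply: irr_coprime; first exact: (mFF g gF).2.
    by apply/negP => dg; move: gn; rewrite (proj2 (hFac g)) //; split => //; exact: mFF.
  have [[c d] /= eC] := Bezout_eq1_coprimepP _ _ cop2.
  have ge : goodF C F e by have := fr_good (t := RInv e) (conj me hfin) sub.
  exists (c * a * powC C (Fac e)) => V th HC x.
  exact: (nf_inv wf HC hF x me ge (esym eP) eB eC).
- move=> [v1 v2] sub.
  have s1 : {subset needed C t1 <= F} by move=> f hf; apply: sub; rewrite mem_cat hf.
  have s2 : {subset needed C t2 <= F} by move=> f hf; apply: sub; rewrite mem_cat hf orbT.
  have [σ1 h1] := IH1 v1 s1; have [σ2 h2] := IH2 v2 s2.
  exists (σ1 + σ2) => V th HC x; rewrite h1 // h2 // pe_add addrACA.
  by rewrite (frac_add wf HC hF _ _ (fr_good v1 s1) (fr_good v2 s2) (piW_W wf HC hF x)).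
- move=> [v1 v2] sub.
  have s1 : {subset needed C t1 <= F} by move=> f hf; apply: sub; rewrite mem_cat hf.
  have s2 : {subset needed C t2 <= F} by move=> f hf; apply: sub; rewrite mem_cat hf orbT.
  have [σ1 h1] := IH1 v1 s1; have [σ2 h2] := IH2 v2 s2.
  exists (σ1 * σ2) => V th HC x; rewrite h1 //.
  have [e1 e2] := nf_split wf HC hF (fr_good v2 s2) (h2 V th HC x).
  by rewrite e2 e1 (frac_comp wf HC hF _ _ (fr_good v1 s1) (fr_good v2 s2) (piW_W wf HC hF x)) [peval (σ1 * σ2) _ _]pe_mul.
Qed.

End Terms.


Section Min.
Variable K : fieldType.
Variable C : kconf K.
Variable F : seq {poly K}.
Implicit Types p q f g b : {poly K}.

Lemma big_gcd_dvd (I : eqType) (s : seq I) (A : I -> {poly K}) j :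
  j \in s -> \big[@gcdp K/0]_(i <- s) A i %| A j.
Proof.
elim: s => // x s IH; rewrite in_cons big_cons => /orP [/eqP ->|js].
  exact: dvdp_gcdl.
by apply: dvdp_trans (IH js); apply: dvdp_gcdr.
Qed.

Lemma goodF_sub F' b : {subset F <= F'} -> goodF C F b -> goodF C F' b.
Proof.
move=> s [mb hb]; split => // f mf df; case: (hb f mf df) => h; last by right.
by left; apply: s.
Qed.

Lemma descent n (a b : 'I_n -> {poly K}) m : forall (A : 'I_n -> {poly K}) (E : {poly K}),
  (size E <= m)%N -> goodF C F E -> (forall i, a i * E = A i * b i) ->
  exists (A' : 'I_n -> {poly K}) E', goodF C F E' /\
    (forall i, a i * E' = A' i * b i) /\
    gcdp (\big[@gcdp K/0]_(i < n) A' i) E' %= 1.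
Proof.
elim: m => [|m IH] A E hs gE hA.
  by move: hs; rewrite leqn0 size_poly_eq0 (negPf (monic_neq0 gE.1)).
have [h1|h1] := boolP (gcdp (\big[@gcdp K/0]_(i < n) A i) E %= 1).
  by exists A, E.
set g := gcdp _ E in h1.
have En0 : E != 0 := monic_neq0 gE.1.
have gn0 : g != 0 by rewrite gcdp_eq0 negb_and En0 orbT.
have sg : (1 < size g)%N.
  move: h1 gn0; rewrite -size_poly_eq1 -size_poly_gt0.
  by case: (size g) => [|[|k]].
have [f [mf df]] := exists_irr_div sg.
have fn0 : f != 0 by exact: irredp_neq0 mf.2.
have dE : f %| E by apply: dvdp_trans df (dvdp_gcdr _ _).
have dA i : f %| A i.
  apply: dvdp_trans df _; apply: dvdp_trans (dvdp_gcdl _ _) _.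
  by apply: big_gcd_dvd; rewrite mem_index_enum.
set E' := E %/ f; have eE : E' * f = E by rewrite divpK.
pose A' i := A i %/ f; have eA i : A' i * f = A i by rewrite divpK.
have E'n0 : E' != 0 by apply: contraTneq En0 => h; rewrite -eE h mul0r eqxx.
apply: (IH A' E').
- move: hs; rewrite -eE size_mul //; have := mf.2.1.
  case: (size f) => [|[|k]] //= _; rewrite !addnS /= ltnS; apply: leq_trans.
  exact: leq_addr.
- split; first by move: gE.1; rewrite -eE monicMr //; case: mf.
  by move=> h mh dh; apply: gE.2 => //; rewrite -eE; apply: dvdp_mulr.
move=> i; apply: (mulIf fn0).
by rewrite -mulrA eE hA -eA mulrAC.
Qed.

Lemma minim n (a b : 'I_n -> {poly K}) : (forall i, goodF C F (b i)) ->
  exists (A : 'I_n -> {poly K}) E, goodF C F E /\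
    (forall i, a i * E = A i * b i) /\
    gcdp (\big[@gcdp K/0]_(i < n) A i) E %= 1.
Proof.
move=> gb; set E := \prod_(i < n) b i.
have gE : goodF C F E.
  by apply: (big_ind (goodF C F)) => //; [exact: goodF1|exact: goodF_mul].
have dE i : b i %| E by rewrite /E (bigD1 i) //= dvdp_mulr.
apply: (@descent n a b (size E) (fun i => a i * (E %/ b i)) E) => // i.
by rewrite -mulrA divpK.
Qed.
End Min.

Theorem theorem3p25 (K : fieldType) (C : kconf K) (n : nat)
    (r : 'I_n -> rterm K) (F0 : seq {poly K}) :
  kconf_wf C ->
  (forall i, rvalid C (r i)) ->
  fin_sub_irr C F0 ->
  exists (F : seq {poly K}) (eta : {poly K}) (rhoF : 'I_n -> {poly K})
         (rhof : {poly K} -> 'I_n -> {poly K}),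
    [/\ (* (1) *) fin_sub_irr C F /\ {subset F0 <= F},
        (* (2) *) eta \is monic /\
          (forall f, mirr f -> f %| eta -> f \in F \/ Cval C f = Some 0%N),
        (* (3) *) (forall i f, mirr f -> rhoF i != 0 -> f %| rhoF i ->
            [\/ f \in F, Cval C f = Some 0%N | Cval C f = None]) /\
          gcdp (\big[@gcdp K/0]_(i < n) rhoF i) eta %= 1,
        (* (4) *) (forall f i, f \in F -> (size (rhof f i) < size (f ^+ Cn C f))%N)
      & forall (V : lmodType K) (th : {linear V -> V}),
          C_img_complete C th ->
          forall i x,
            rinterp C th (r i) x =
              peval (rhoF i) th (inv_eval C eta th (pi_Im C F th x)) +
              \sum_(f <- F) peval (rhof f i) th (pi_Ker C [:: f] th x)].
Proof.
move=> wf hv hF0.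
set Nall := flatten [seq needed C (r i) | i <- enum 'I_n].
set F1 := undup (F0 ++ Nall).
have hF1 : fin_sub_irr C F1.
  split; first exact: undup_uniq.
  move=> f; rewrite mem_undup mem_cat => /orP [/(hF0.2)//|].
  by move=> /flatten_mapP [i _ hf]; exact: needed_ok (hv i) f hf.
have sN i : {subset needed C (r i) <= F1}.
  move=> f hf; rewrite mem_undup mem_cat; apply/orP; right.
  by apply/flatten_mapP; exists i => //; rewrite mem_enum.
have gb i : goodF C F1 (fr (r i)).2 by apply: fr_good (hv i) (sN i).
have [A [E [gE [hA hg]]]] := minim (fun i => (fr (r i)).1) gb.
set G := undup [seq f <- flatten [seq (if A i == 0 then [::] else Fac (A i))
                                 | i <- enum 'I_n] | (f \notin F1) && posC C f].
set F := F1 ++ G.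
have memG f : f \in G -> [/\ f \notin F1, mirr f & exists k, Cval C f = Some k.+1].
  rewrite mem_undup mem_filter => /andP [/andP [fF1 /posCP pk]] /flatten_mapP [i _].
  case: eqP => // /eqP Ai; have [_ hFac] := Fac_spec Ai.
  by move=> /hFac [mf _].
have hF : fin_sub_irr C F.
  split.
    rewrite cat_uniq !undup_uniq /= andbT; apply/hasPn => f /memG [].
    by [].
  move=> f; rewrite mem_cat => /orP [/(hF1.2)//|/memG [_ mf pk]].
  by [].
have sF1 : {subset F1 <= F} by move=> f hf; rewrite mem_cat hf.
have sNF i : {subset needed C (r i) <= F} by move=> f /(sN i) /sF1.
have hs i := term_nf wf hF (hv i) (sNF i).
have [σ hσ] := fin_all_exists hs.
exists F, E, A, (fun f i => σ i %% f ^+ Cn C f); split.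
- split => // f hf; rewrite mem_cat mem_undup mem_cat hf; done.
- split; first exact: gE.1.
  by move=> f mf df; case: (gE.2 f mf df) => h; [left; apply: sF1|right].
- split => // i f mf Ai df.
  case eC : (Cval C f) => [[|k]|]; [by constructor 2|idtac|by constructor 3].
  constructor 1; rewrite mem_cat; apply/orP.
  have [fF1|fF1] := boolP (f \in F1); first by left.
  right; rewrite mem_undup mem_filter fF1 /posC eC /=.
  apply/flatten_mapP; exists i; first by rewrite mem_enum.
  rewrite (negPf Ai); have [_ hFac] := Fac_spec Ai; exact/hFac.
- move=> f i hf; rewrite ltn_modp expf_neq0 //.
  by have [mf _] := hF.2 f hf; exact: irredp_neq0 mf.2.
move=> V th HC i x.
rewrite (hσ i V th HC x) (ker_final wf HC (σ i) x hF); congr (_ + _).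
apply: (frac_eq wf HC hF).
- exact: (goodF_sub sF1 (gb i)).
- exact: (goodF_sub sF1 gE).
- exact: hA.
exact: piW_W.
Qed.
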